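(* Let $\mathcal{H}=(\mathbb{C}^3)^{\otimes 3}$, $E_3=\mathrm{diag}(1,-1,0)$, $\mathcal{L}oc=\{\, i(L\otimes \mathbf{1}\otimes \mathbf{1}+\mathbf{1}\otimes L\otimes \mathbf{1}+\mathbf{1}\otimes\mathbf{1}\otimes L) : L \text{ traceless Hermitian } 3\times 3\,\}$ and $H=E_3\otimes E_3\otimes \mathbf{1}+E_3\otimes \mathbf{1}\otimes E_3+\mathbf{1}\otimes E_3\otimes E_3$. Let $\mathcal{L}$ be the real Lie algebra generated by $\mathcal{L}oc$ and $iH$, and let $\mathrm{Sym}\subseteq\mathcal H$ be the $10$-dimensional symmetric subspace (vectors invariant under all permutations of the tensor factors), which is invariant under $\mathcal L$. Then for every traceless skew-Hermitian operator $X$ on $\mathrm{Sym}$ there exists $Y\in\mathcal{L}$ whose restriction to $\mathrm{Sym}$ equals $X$; i.e., $\mathcal L$ restricted to $\mathrm{Sym}$ contains all of $su(10)$. *)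

(* Defs.v *)
From mathcomp Require Import all_boot all_order all_algebra all_fingroup all_field.
Set Implicit Arguments. Unset Strict Implicit. Unset Printing Implicit Defensive.
Import Order.TTheory GRing.Theory Num.Theory.
Local Open Scope ring_scope.

(* H = (C^3)^{(x)3} = C^27; the basis index i : 'I_27 is identified with the
   triple of digits (i1,i2,i3) : 'I_3^3 via i = 9*i1 + 3*i2 + i3. *)
Definition dig (i : 'I_27) (k : 'I_3) : 'I_3 :=
  inord ((i %/ 3 ^ (2 - k)) %% 3).
Definition enc (f : 'I_3 -> 'I_3) : 'I_27 :=
  inord (9 * f ord0 + 3 * f (inord 1) + f (inord 2)).

Definition kron3 (A B C : 'M[algC]_3) : 'M[algC]_27 :=
  \matrix_(i, j) (A (dig i ord0) (dig j ord0) * B (dig i (inord 1)) (dig j (inord 1))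
                  * C (dig i (inord 2)) (dig j (inord 2))).

Definition adjm {m n} (A : 'M[algC]_(m, n)) : 'M[algC]_(n, m) := (map_mx Num.conj A)^T.

Definition E3 : 'M[algC]_3 := diag_mx (\row_(i < 3) [:: 1; -1; 0]`_i).

Definition Hmat : 'M[algC]_27 :=
  kron3 E3 E3 1%:M + kron3 E3 1%:M E3 + kron3 1%:M E3 E3.

Definition Loc (A : 'M[algC]_27) : Prop :=
  exists L : 'M[algC]_3, adjm L = L /\ \tr L = 0 /\
    A = 'i *: (kron3 L 1%:M 1%:M + kron3 1%:M L 1%:M + kron3 1%:M 1%:M L).

Definition gens (A : 'M[algC]_27) : Prop := Loc A \/ A = 'i *: Hmat.

Inductive lie_gen {n} (S : 'M[algC]_n -> Prop) : 'M[algC]_n -> Prop :=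
| lie_base A : S A -> lie_gen S A
| lie_add A B : lie_gen S A -> lie_gen S B -> lie_gen S (A + B)
| lie_scale (c : algC) A : c \is Num.real -> lie_gen S A -> lie_gen S (c *: A)
| lie_bracket A B : lie_gen S A -> lie_gen S B -> lie_gen S (A *m B - B *m A).

Definition in_Sym (v : 'cV[algC]_27) : Prop :=
  forall (s : 'S_3) (i : 'I_27), v (enc (fun k => dig i (s k))) ord0 = v i ord0.

(* Main.v *)
From Stdlib Require Import ZArith.
Require Import Defs.
From mathcomp Require Import all_boot all_order all_algebra all_fingroup all_field.
From mathcomp Require Import ssrZ.
From mathcomp Require Import ring zify.
Import Order.TTheory GRing.Theory Num.Theory.
Local Open Scope ring_scope.

Definition zR (z : Z) : algC := (int_of_Z z)%:~R.
Lemma zR_add a b : zR (Z.add a b) = zR a + zR b.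
Proof. by rewrite /zR -intrD -(rmorphD int_of_Z). Qed.
Lemma zR_mul a b : zR (Z.mul a b) = zR a * zR b.
Proof. by rewrite /zR -intrM -(rmorphM int_of_Z). Qed.
Lemma zR_sub a b : zR (Z.sub a b) = zR a - zR b.
Proof. by rewrite /zR -intrB -(rmorphB int_of_Z). Qed.
Lemma zR_opp a : zR (Z.opp a) = - zR a.
Proof. by rewrite /zR -intrN -(rmorphN int_of_Z). Qed.
Lemma zR0 : zR Z0 = 0. Proof. by []. Qed.
Lemma zR1 : zR (Zpos xH) = 1. Proof. by []. Qed.
Lemma zR_real z : zR z \is Num.real. Proof. exact: realz. Qed.
Lemma zR_nat n : zR (Z.of_nat n) = n%:R.
Proof.
elim: n => [|n IH]; first by [].
by rewrite Nat2Z.inj_succ -Z.add_1_r zR_add IH zR1 -natr1.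
Qed.

Definition gz := (Z * Z)%type.
Definition g0 : gz := (Z0, Z0).
Definition gadd (x y : gz) : gz := (Z.add x.1 y.1, Z.add x.2 y.2).
Definition gmul (x y : gz) : gz :=
  (Z.sub (Z.mul x.1 y.1) (Z.mul x.2 y.2), Z.add (Z.mul x.1 y.2) (Z.mul x.2 y.1)).
Definition gconj (x : gz) : gz := (x.1, Z.opp x.2).
Definition geqb (x y : gz) : bool := Z.eqb x.1 y.1 && Z.eqb x.2 y.2.
Definition gphi (x : gz) : algC := zR x.1 + 'i * zR x.2.

Lemma gphi0 : gphi g0 = 0. Proof. by rewrite /gphi /= zR0 mulr0 addr0. Qed.
Lemma gphi_add x y : gphi (gadd x y) = gphi x + gphi y.
Proof. rewrite /gphi /= !zR_add; ring. Qed.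
Lemma gphi_mul x y : gphi (gmul x y) = gphi x * gphi y.
Proof.
rewrite /gphi /= zR_sub zR_add !zR_mul.
have hi : 'i * 'i = -1 :> algC by rewrite -expr2 sqrCi.
transitivity (zR x.1 * zR y.1 + zR x.2 * zR y.2 * ('i * 'i) + 'i * (zR x.1 * zR y.2 + zR x.2 * zR y.1)).
  by rewrite hi; ring.
ring.
Qed.
Lemma gphi_conj x : gphi (gconj x) = (gphi x)^*.
Proof. by rewrite /gphi /= conjC_rect ?zR_real // zR_opp mulrN. Qed.
Lemma geqbP x y : geqb x y -> gphi x = gphi y.
Proof. by case: x y => a b [c d] /andP[/Z.eqb_eq /= -> /Z.eqb_eq /= ->]. Qed.

Definition cmat := seq (seq gz).
Definition gnth (A : cmat) (i j : nat) : gz := nth g0 (nth [::] A i) j.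
Definition interp m n (A : cmat) : 'M[algC]_(m, n) := \matrix_(i < m, j < n) gphi (gnth A i j).
Definition mkmat m n (f : nat -> nat -> gz) : cmat := mkseq (fun i => mkseq (f i) n) m.
Lemma gnth_mkmat m n f i j : (i < m)%N -> (j < n)%N -> gnth (mkmat m n f) i j = f i j.
Proof. by move=> hi hj; rewrite /gnth /mkmat (nth_mkseq [::]) // (nth_mkseq g0). Qed.
Lemma interp_mkmat m n f : interp m n (mkmat m n f) = \matrix_(i < m, j < n) gphi (f i j).
Proof. by apply/matrixP => i j; rewrite !mxE gnth_mkmat. Qed.

Definition gsum n (f : nat -> gz) : gz := foldr (fun j acc => gadd (f j) acc) g0 (iota 0 n).
Lemma gphi_gsum n f : gphi (gsum n f) = \sum_(j < n) gphi (f j).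
Proof.
rewrite -(big_mkord xpredT (fun j => gphi (f j))) /gsum /index_iota subn0.
elim: (iota 0 n) => [|a s IH] /=; first by rewrite big_nil gphi0.
by rewrite big_cons gphi_add IH.
Qed.

Definition cadd m n (A B : cmat) := mkmat m n (fun i j => gadd (gnth A i j) (gnth B i j)).
Definition cscale m n (c : gz) (A : cmat) := mkmat m n (fun i j => gmul c (gnth A i j)).
Definition cmul m n p (A B : cmat) :=
  mkmat m p (fun i k => gsum n (fun j => gmul (gnth A i j) (gnth B j k))).
Definition cadj m n (A : cmat) := mkmat n m (fun i j => gconj (gnth A j i)).
Definition ceqb m n (A B : cmat) : bool :=
  all (fun i => all (fun j => geqb (gnth A i j) (gnth B i j)) (iota 0 n)) (iota 0 m).

Lemma interp_add m n A B : interp m n (cadd m n A B) = interp m n A + interp m n B.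
Proof. by rewrite interp_mkmat; apply/matrixP => i j; rewrite !mxE gphi_add. Qed.
Lemma interp_scale m n c A : interp m n (cscale m n c A) = gphi c *: interp m n A.
Proof. by rewrite interp_mkmat; apply/matrixP => i j; rewrite !mxE gphi_mul. Qed.
Lemma interp_mul m n p A B : interp m p (cmul m n p A B) = interp m n A *m interp n p B.
Proof.
rewrite interp_mkmat; apply/matrixP => i k; rewrite !mxE gphi_gsum.
by apply: eq_bigr => j _; rewrite !mxE gphi_mul.
Qed.
Lemma interp_adj m n A : interp n m (cadj m n A) = adjm (interp m n A).
Proof. by rewrite interp_mkmat; apply/matrixP => i j; rewrite !mxE gphi_conj. Qed.
Lemma ceqbP m n A B : ceqb m n A B -> interp m n A = interp m n B.
Proof.
move=> /allP h; apply/matrixP => i j; rewrite !mxE; apply: geqbP.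
have hi : (nat_of_ord i) \in iota 0 m by rewrite mem_iota /=.
have hj : (nat_of_ord j) \in iota 0 n by rewrite mem_iota /=.
by have /allP := h i hi; apply.
Qed.
Lemma interp_tr n A : \tr (interp n n A) = gphi (gsum n (fun i => gnth A i i)).
Proof. by rewrite gphi_gsum /mxtrace; apply: eq_bigr => i _; rewrite mxE. Qed.

Inductive instr := IGen of nat | IBr of nat & nat | ILin of seq (Z * nat).

Definition c0 : cmat := [::].
Definition cbr (N : nat) (A B : cmat) : cmat :=
  cadd N N (cmul N N N A B) (cscale N N (Zneg xH, Z0) (cmul N N N B A)).
Definition step (N : nat) (gensC : seq cmat) (acc : seq cmat) (ins : instr) : cmat :=
  match ins with
  | IGen g => nth c0 gensC g
  | IBr a b => cbr N (nth c0 acc a) (nth c0 acc b)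
  | ILin l => foldr (fun p s => cadd N N (cscale N N (p.1, Z0) (nth c0 acc p.2)) s) c0 l
  end.
Definition run (N : nat) (gensC : seq cmat) (p : seq instr) : seq cmat :=
  foldl (fun acc ins => rcons acc (step N gensC acc ins)) [::] p.

Lemma interp_c0 N : interp N N c0 = 0.
Proof. by apply/matrixP => i j; rewrite !mxE /gnth !nth_nil gphi0. Qed.

Lemma P'nth N (P : 'M[algC]_N -> Prop) (P0 : P 0) acc k :
  (forall x, x \in acc -> P (interp N N x)) -> P (interp N N (nth c0 acc k)).
Proof.
move=> h; case: (ltnP k (size acc)) => hk; first by apply: h; rewrite mem_nth.
by rewrite nth_default // interp_c0.
Qed.

Lemma run_inv N (gensC : seq cmat) (P : 'M[algC]_N -> Prop)
  (P0 : P 0)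
  (Pgen : forall g, P (interp N N (nth c0 gensC g)))
  (Padd : forall A B, P A -> P B -> P (A + B))
  (Pscale : forall c A, c \is Num.real -> P A -> P (c *: A))
  (Pbr : forall A B, P A -> P B -> P (A *m B - B *m A))
  p k : P (interp N N (nth c0 (run N gensC p) k)).
Proof.
have P'step : forall acc ins, (forall x, x \in acc -> P (interp N N x)) ->
    P (interp N N (step N gensC acc ins)).
  move=> acc ins h; case: ins => [g|a b|l] /=.
  - exact: Pgen.
  - rewrite /cbr interp_add interp_scale !interp_mul.
    have -> : gphi (Zneg xH, Z0) = -1 by rewrite /gphi /= zR0 mulr0 addr0.
    by rewrite scaleN1r; apply: Pbr; apply: P'nth.
  - elim: l => [|[z k'] l IH] /=; first by rewrite interp_c0.
    rewrite interp_add interp_scale; apply: Padd => //.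
    apply: Pscale; last exact: P'nth.
    by rewrite /gphi /= zR0 mulr0 addr0 zR_real.
suff : forall acc, (forall x, x \in acc -> P (interp N N x)) ->
   forall x, x \in foldl (fun acc ins => rcons acc (step N gensC acc ins)) acc p -> P (interp N N x).
  by move=> H; apply: P'nth => //; apply: H.
elim: p => [|ins p IH] acc h //=.
apply: IH => x; rewrite mem_rcons inE => /orP[/eqP ->|]; last exact: h.
exact: P'step.
Qed.

Local Open Scope Z_scope.
Definition gensR : seq cmat := [:: [:: [:: (0,0); (0,3); (0,0); (0,0); (0,0); (0,0); (0,0); (0,0); (0,0); (0,0)]; [:: (0,1); (0,0); (0,0); (0,2); (0,0); (0,0); (0,0); (0,0); (0,0); (0,0)]; [:: (0,0); (0,0); (0,0); (0,0); (0,2); (0,0); (0,0); (0,0); (0,0); (0,0)]; [:: (0,0); (0,2); (0,0); (0,0); (0,0); (0,0); (0,1); (0,0); (0,0); (0,0)]; [:: (0,0); (0,0); (0,1); (0,0); (0,0); (0,0); (0,0); (0,1); (0,0); (0,0)]; [:: (0,0); (0,0); (0,0); (0,0); (0,0); (0,0); (0,0); (0,0); (0,1); (0,0)]; [:: (0,0); (0,0); (0,0); (0,3); (0,0); (0,0); (0,0); (0,0); (0,0); (0,0)]; [:: (0,0); (0,0); (0,0); (0,0); (0,2); (0,0); (0,0); (0,0); (0,0); (0,0)]; [:: (0,0); (0,0); (0,0); (0,0); (0,0); (0,1); (0,0); (0,0); (0,0); (0,0)]; [:: (0,0); (0,0); (0,0); (0,0); (0,0); (0,0); (0,0); (0,0);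 (0,0); (0,0)]];
 [:: [:: (0,0); (0,0); (0,0); (0,0); (0,0); (0,0); (0,0); (0,0); (0,0); (0,0)]; [:: (0,0); (0,0); (0,1); (0,0); (0,0); (0,0); (0,0); (0,0); (0,0); (0,0)]; [:: (0,0); (0,1); (0,0); (0,0); (0,0); (0,0); (0,0); (0,0); (0,0); (0,0)]; [:: (0,0); (0,0); (0,0); (0,0); (0,2); (0,0); (0,0); (0,0); (0,0); (0,0)]; [:: (0,0); (0,0); (0,0); (0,1); (0,0); (0,1); (0,0); (0,0); (0,0); (0,0)]; [:: (0,0); (0,0); (0,0); (0,0); (0,2); (0,0); (0,0); (0,0); (0,0); (0,0)]; [:: (0,0); (0,0); (0,0); (0,0); (0,0); (0,0); (0,0); (0,3); (0,0); (0,0)]; [:: (0,0); (0,0); (0,0); (0,0); (0,0); (0,0); (0,1); (0,0); (0,2); (0,0)]; [:: (0,0); (0,0); (0,0); (0,0); (0,0); (0,0); (0,0); (0,2); (0,0); (0,1)]; [:: (0,0); (0,0); (0,0); (0,0); (0,0); (0,0); (0,0); (0,0); (0,3); (0,0)]];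
 [:: [:: (0,3); (0,0); (0,0); (0,0); (0,0); (0,0); (0,0); (0,0); (0,0); (0,0)]; [:: (0,0); (0,1); (0,0); (0,0); (0,0); (0,0); (0,0); (0,0); (0,0); (0,0)]; [:: (0,0); (0,0); (0,2); (0,0); (0,0); (0,0); (0,0); (0,0); (0,0); (0,0)]; [:: (0,0); (0,0); (0,0); (0,(-1)); (0,0); (0,0); (0,0); (0,0); (0,0); (0,0)]; [:: (0,0); (0,0); (0,0); (0,0); (0,0); (0,0); (0,0); (0,0); (0,0); (0,0)]; [:: (0,0); (0,0); (0,0); (0,0); (0,0); (0,1); (0,0); (0,0); (0,0); (0,0)]; [:: (0,0); (0,0); (0,0); (0,0); (0,0); (0,0); (0,(-3)); (0,0); (0,0); (0,0)]; [:: (0,0); (0,0); (0,0); (0,0); (0,0); (0,0); (0,0); (0,(-2)); (0,0); (0,0)]; [:: (0,0); (0,0); (0,0); (0,0); (0,0); (0,0); (0,0); (0,0); (0,(-1)); (0,0)]; [:: (0,0); (0,0); (0,0); (0,0); (0,0); (0,0); (0,0); (0,0); (0,0); (0,0)]];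
 [:: [:: (0,3); (0,0); (0,0); (0,0); (0,0); (0,0); (0,0); (0,0); (0,0); (0,0)]; [:: (0,0); (0,(-1)); (0,0); (0,0); (0,0); (0,0); (0,0); (0,0); (0,0); (0,0)]; [:: (0,0); (0,0); (0,1); (0,0); (0,0); (0,0); (0,0); (0,0); (0,0); (0,0)]; [:: (0,0); (0,0); (0,0); (0,(-1)); (0,0); (0,0); (0,0); (0,0); (0,0); (0,0)]; [:: (0,0); (0,0); (0,0); (0,0); (0,(-1)); (0,0); (0,0); (0,0); (0,0); (0,0)]; [:: (0,0); (0,0); (0,0); (0,0); (0,0); (0,0); (0,0); (0,0); (0,0); (0,0)]; [:: (0,0); (0,0); (0,0); (0,0); (0,0); (0,0); (0,3); (0,0); (0,0); (0,0)]; [:: (0,0); (0,0); (0,0); (0,0); (0,0); (0,0); (0,0); (0,1); (0,0); (0,0)]; [:: (0,0); (0,0); (0,0); (0,0); (0,0); (0,0); (0,0); (0,0); (0,0); (0,0)]; [:: (0,0); (0,0); (0,0); (0,0); (0,0); (0,0); (0,0); (0,0); (0,0); (0,0)]]].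
Definition prog : seq instr := [:: IGen 0;
 IGen 1;
 IGen 2;
 IGen 3;
 IBr 1 0;
 IBr 2 0;
 IBr 3 0;
 IBr 2 1;
 IBr 3 1;
 IBr 2 4;
 IBr 3 4;
 IBr 3 5;
 IBr 0 6;
 IBr 1 6;
 IBr 3 6;
 IBr 1 7;
 IBr 3 7;
 IBr 1 8;
 IBr 3 8;
 IBr 3 9;
 IBr 0 10;
 IBr 1 10;
 IBr 3 10;
 IBr 0 11;
 IBr 1 11;
 IBr 3 11;
 IBr 3 12;
 IBr 1 13;
 IBr 2 13;
 IBr 3 13;
 IBr 1 14;
 IBr 3 14;
 IBr 1 16;
 IBr 3 16;
 IBr 1 17;
 IBr 3 17;
 IBr 3 18;
 IBr 0 19;
 IBr 1 19;
 IBr 3 19;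
 IBr 1 20;
 IBr 2 20;
 IBr 3 20;
 IBr 0 21;
 IBr 1 21;
 IBr 2 21;
 IBr 3 21;
 IBr 0 22;
 IBr 1 22;
 IBr 3 22;
 IBr 2 23;
 IBr 3 23;
 IBr 3 24;
 IBr 0 25;
 IBr 0 26;
 IBr 1 26;
 IBr 3 26;
 IBr 0 29;
 IBr 1 29;
 IBr 3 29;
 IBr 1 30;
 IBr 3 30;
 IBr 0 31;
 IBr 3 31;
 IBr 2 32;
 IBr 3 32;
 IBr 1 33;
 IBr 1 35;
 IBr 3 35;
 IBr 1 36;
 IBr 3 36;
 IBr 1 37;
 IBr 3 37;
 IBr 1 39;
 IBr 3 40;
 IBr 0 42;
 IBr 1 42;
 IBr 3 42;
 IBr 0 46;
 IBr 1 46;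
 IBr 3 46;
 IBr 0 47;
 IBr 1 47;
 IBr 3 47;
 IBr 1 48;
 IBr 1 49;
 IBr 0 51;
 IBr 1 51;
 IBr 1 52;
 IBr 1 65;
 IBr 3 71;
 IBr 0 72;
 IBr 1 72;
 IBr 1 73;
 IBr 0 74;
 IBr 1 74;
 IBr 0 90;
 IBr 1 90;
 IBr 1 94;
 IBr 1 96;
 ILin [:: (2, 5%nat); (11, 6%nat); (10, 21%nat); (3, 25%nat); ((-1), 27%nat); (5, 31%nat); (6, 80%nat)];
 ILin [:: ((-24), 11%nat); ((-20), 14%nat); ((-48), 38%nat); (24, 45%nat); ((-48), 46%nat); (1, 63%nat)];
 ILin [:: (16, 4%nat); (280, 19%nat); ((-145), 22%nat); ((-68), 24%nat); (56, 28%nat); ((-10), 29%nat); (20, 30%nat); (2, 75%nat); (8, 79%nat); ((-3), 81%nat)];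
 ILin [:: ((-32), 10%nat); ((-12), 39%nat); ((-44), 49%nat); (3, 52%nat); ((-12), 59%nat); (9, 61%nat)];
 ILin [:: ((-5), 23%nat); ((-6), 26%nat); ((-4), 32%nat); ((-4), 71%nat); ((-8), 78%nat)];
 ILin [:: ((-2), 51%nat); ((-1), 56%nat)];
 ILin [:: ((-192), 7%nat); ((-424), 8%nat); ((-144), 20%nat); (126, 33%nat); ((-16), 34%nat); ((-15), 36%nat); ((-90), 72%nat); ((-54), 77%nat); ((-27), 83%nat)];
 ILin [:: (168, 16%nat); (104, 18%nat); ((-60), 37%nat); (12, 41%nat); (36, 42%nat); (12, 47%nat); ((-9), 55%nat); (12, 57%nat); (8, 70%nat)];
 ILin [:: ((-3), 23%nat); (10, 26%nat); (16, 32%nat); (14, 35%nat); ((-8), 71%nat); (16, 74%nat); ((-4), 76%nat); (8, 78%nat); ((-2), 82%nat)];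
 ILin [:: (512, 2%nat); (256, 12%nat); (64, 17%nat); ((-128), 40%nat); (640, 43%nat); ((-24), 50%nat); (54, 51%nat); (9, 56%nat); ((-192), 64%nat); ((-288), 65%nat); (192, 66%nat); (32, 69%nat); (288, 90%nat); ((-96), 92%nat)];
 ILin [:: ((-188), 5%nat); (6, 6%nat); (212, 21%nat); ((-30), 25%nat); ((-50), 27%nat); (6, 31%nat); (12, 80%nat); ((-3), 86%nat)];
 ILin [:: (576, 0%nat); ((-72), 11%nat); (76, 14%nat); ((-144), 45%nat); (6, 54%nat); (1, 63%nat)];
 ILin [:: (16, 4%nat); ((-8), 19%nat); ((-43), 22%nat); (4, 24%nat); (8, 28%nat); (2, 29%nat); (12, 30%nat); (6, 75%nat); (8, 79%nat); ((-1), 81%nat)];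
 ILin [:: (3584, 9%nat); ((-1952), 10%nat); (1424, 13%nat); (2484, 39%nat); (896, 44%nat); ((-644), 49%nat); ((-111), 52%nat); ((-252), 59%nat); (171, 61%nat); (216, 91%nat)];
 ILin [:: ((-160), 5%nat); ((-120), 6%nat); ((-640), 21%nat); (18, 25%nat); (56, 27%nat); ((-18), 31%nat); (288, 73%nat); ((-72), 80%nat); (64, 85%nat); (9, 86%nat); ((-12), 88%nat); (36, 96%nat)];
 ILin [:: (48, 0%nat); ((-42), 11%nat); ((-4), 14%nat); ((-120), 38%nat); (12, 45%nat); (72, 46%nat); ((-168), 48%nat); ((-6), 54%nat); ((-48), 58%nat); (30, 60%nat); ((-1), 63%nat); ((-12), 94%nat)];
 ILin [:: ((-24), 4%nat); (180, 19%nat); ((-109), 22%nat); ((-42), 24%nat); (36, 28%nat); (26, 29%nat); ((-4), 30%nat); ((-6), 75%nat); ((-7), 81%nat); ((-2), 98%nat)];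
 ILin [:: ((-508), 9%nat); (1186, 10%nat); ((-1048), 13%nat); ((-2376), 39%nat); (116, 44%nat); ((-1160), 49%nat); (762, 52%nat); ((-144), 59%nat); (225, 61%nat); ((-432), 91%nat); ((-81), 99%nat)];
 ILin [:: ((-8), 8%nat); (18, 33%nat); (19, 36%nat); ((-6), 72%nat); (6, 77%nat); ((-9), 83%nat)];
 ILin [:: (42, 16%nat); (43, 18%nat); ((-15), 37%nat); (3, 41%nat); (6, 42%nat); ((-9), 47%nat); (4, 70%nat)];
 ILin [:: ((-10), 5%nat); (1, 6%nat); (14, 21%nat); ((-1), 25%nat); ((-3), 27%nat); (1, 31%nat); (2, 80%nat)];
 ILin [:: (192, 0%nat); ((-24), 11%nat); (28, 14%nat); ((-48), 45%nat); (1, 63%nat)];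
 ILin [:: (16, 4%nat); (104, 19%nat); ((-65), 22%nat); ((-24), 24%nat); (24, 28%nat); (6, 29%nat); (8, 30%nat); (2, 75%nat); (8, 79%nat); ((-3), 81%nat)];
 ILin [:: (64, 9%nat); ((-16), 10%nat); (16, 13%nat); (36, 39%nat); (16, 44%nat); ((-28), 49%nat); (3, 52%nat); ((-12), 59%nat); (9, 61%nat)];
 ILin [:: ((-2), 5%nat); ((-27), 6%nat); ((-26), 21%nat); (3, 25%nat); (1, 27%nat); ((-3), 31%nat); (24, 73%nat); ((-6), 80%nat); (8, 85%nat)];
 ILin [:: (48, 0%nat); ((-30), 11%nat); ((-28), 14%nat); ((-72), 38%nat); (12, 45%nat); ((-120), 48%nat); ((-24), 58%nat); (18, 60%nat); ((-1), 63%nat)];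
 ILin [:: ((-5), 23%nat); ((-2), 26%nat); ((-4), 32%nat); ((-4), 71%nat); ((-8), 78%nat)];
 ILin [:: (2, 51%nat); ((-1), 56%nat)];
 ILin [:: (384, 7%nat); (1064, 8%nat); (288, 20%nat); ((-738), 33%nat); (32, 34%nat); ((-159), 36%nat); (342, 72%nat); ((-54), 77%nat); ((-27), 83%nat)];
 ILin [:: (180, 16%nat); (98, 18%nat); ((-66), 37%nat); (18, 41%nat); (24, 42%nat); (6, 47%nat); ((-9), 55%nat); (12, 57%nat); (8, 70%nat)];
 ILin [:: ((-1), 23%nat); (6, 26%nat); (8, 32%nat); (6, 35%nat); (8, 74%nat); ((-4), 76%nat); (8, 78%nat); ((-2), 82%nat)];
 ILin [:: (128, 2%nat); (64, 12%nat); ((-32), 17%nat); ((-32), 40%nat); (160, 43%nat); ((-24), 50%nat); (18, 51%nat); (9, 56%nat); ((-48), 64%nat); ((-144), 65%nat); (192, 66%nat); (32, 69%nat); (144, 90%nat); ((-96), 92%nat)];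
 ILin [:: (1056, 7%nat); (1792, 8%nat); (792, 20%nat); (1170, 33%nat); (88, 34%nat); (231, 36%nat); ((-558), 72%nat); (54, 77%nat); (27, 83%nat); ((-81), 87%nat); (324, 89%nat); ((-324), 97%nat)];
 ILin [:: ((-186), 16%nat); ((-95), 18%nat); (81, 37%nat); ((-9), 41%nat); ((-18), 42%nat); ((-3), 47%nat); (15, 55%nat); ((-12), 57%nat); (12, 67%nat); ((-8), 70%nat); (12, 95%nat)];
 ILin [:: ((-16), 4%nat); ((-24), 19%nat); (15, 22%nat); (4, 24%nat); ((-8), 28%nat); (22, 29%nat); ((-20), 30%nat); (2, 75%nat); ((-8), 79%nat); ((-3), 81%nat)];
 ILin [:: (128, 9%nat); ((-224), 10%nat); (128, 13%nat); (324, 39%nat); (32, 44%nat); (4, 49%nat); ((-57), 52%nat); ((-36), 59%nat); (9, 61%nat)];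
 ILin [:: ((-2), 5%nat); ((-19), 6%nat); ((-10), 21%nat); (1, 27%nat); ((-4), 31%nat); ((-6), 80%nat)];
 ILin [:: ((-4), 14%nat); (24, 38%nat); ((-12), 45%nat); (24, 46%nat); ((-1), 63%nat)];
 ILin [:: ((-16), 4%nat); ((-256), 19%nat); (105, 22%nat); (58, 24%nat); ((-48), 28%nat); (2, 29%nat); ((-14), 30%nat); ((-2), 75%nat); ((-8), 79%nat); (3, 81%nat)];
 ILin [:: (16, 10%nat); ((-4), 39%nat); (12, 49%nat); ((-1), 52%nat); (4, 59%nat); ((-3), 61%nat)];
 ILin [:: (1536, 7%nat); (4040, 8%nat); (1152, 20%nat); ((-2466), 33%nat); (128, 34%nat); ((-447), 36%nat); (1206, 72%nat); ((-54), 77%nat); ((-27), 83%nat); ((-81), 87%nat)];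
 ILin [:: (204, 16%nat); (86, 18%nat); ((-78), 37%nat); (30, 41%nat); ((-6), 47%nat); ((-3), 55%nat); (12, 57%nat); (8, 70%nat)];
 ILin [:: (1, 23%nat); (4, 26%nat); (4, 32%nat); (4, 71%nat); (8, 78%nat)];
 ILin [:: ((-2), 50%nat); (1, 56%nat)];
 ILin [:: (768, 7%nat); (1480, 8%nat); (576, 20%nat); (306, 33%nat); (64, 34%nat); (87, 36%nat); ((-126), 72%nat); (54, 77%nat); (27, 83%nat)];
 ILin [:: ((-174), 16%nat); ((-101), 18%nat); (69, 37%nat); ((-9), 41%nat); ((-30), 42%nat); ((-9), 47%nat); (9, 55%nat); ((-12), 57%nat); ((-8), 70%nat)];
 ILin [:: (2, 23%nat); ((-4), 26%nat); ((-10), 32%nat); ((-5), 35%nat); (6, 71%nat); ((-6), 74%nat); (2, 76%nat); ((-4), 78%nat); (1, 82%nat)];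
 ILin [:: ((-704), 2%nat); ((-352), 12%nat); ((-112), 17%nat); (176, 40%nat); ((-880), 43%nat); (24, 50%nat); ((-36), 51%nat); ((-9), 56%nat); (264, 64%nat); (216, 65%nat); ((-192), 66%nat); ((-32), 69%nat); ((-216), 90%nat); (96, 92%nat)];
 ILin [:: (192, 7%nat); (136, 8%nat); (198, 33%nat); (16, 34%nat); (105, 36%nat); ((-18), 72%nat); (18, 77%nat); ((-27), 83%nat)];
 ILin [:: (24, 16%nat); (14, 18%nat); ((-9), 37%nat); (3, 41%nat); (2, 70%nat)];
 ILin [:: ((-2), 32%nat); ((-5), 35%nat); (2, 71%nat); ((-2), 76%nat); (3, 82%nat)];
 ILin [:: ((-3), 64%nat); ((-8), 65%nat); ((-2), 68%nat)];
 ILin [:: (2, 5%nat); ((-5), 6%nat); (10, 21%nat); (3, 25%nat); ((-1), 27%nat); (1, 31%nat); (6, 80%nat)];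
 ILin [:: (24, 11%nat); (28, 14%nat); (48, 38%nat); ((-24), 45%nat); (48, 46%nat); (1, 63%nat)];
 ILin [:: (16, 4%nat); (120, 19%nat); ((-49), 22%nat); ((-28), 24%nat); (24, 28%nat); (22, 29%nat); ((-4), 30%nat); (2, 75%nat); (8, 79%nat); ((-3), 81%nat)];
 ILin [:: ((-4), 39%nat); ((-4), 49%nat); (1, 52%nat); ((-4), 59%nat); (3, 61%nat)];
 ILin [:: ((-2), 5%nat); (17, 6%nat); ((-2), 21%nat); (1, 27%nat); ((-1), 31%nat); ((-6), 80%nat); (8, 85%nat)];
 ILin [:: (48, 0%nat); ((-18), 11%nat); ((-40), 14%nat); ((-72), 38%nat); (36, 45%nat); ((-48), 46%nat); ((-72), 48%nat); ((-24), 58%nat); (18, 60%nat); ((-1), 63%nat)];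
 ILin [:: (16, 4%nat); (16, 19%nat); ((-7), 22%nat); (6, 24%nat); ((-8), 28%nat); ((-46), 29%nat); (18, 30%nat); ((-2), 75%nat); ((-24), 79%nat); (3, 81%nat); (16, 84%nat)];
 ILin [:: (704, 9%nat); ((-1016), 10%nat); ((-160), 13%nat); (540, 39%nat); ((-40), 44%nat); ((-140), 49%nat); ((-3), 52%nat); (180, 59%nat); ((-153), 61%nat); (216, 93%nat)];
 ILin [:: (8, 8%nat); ((-14), 33%nat); ((-9), 36%nat); (2, 72%nat); ((-2), 77%nat); (3, 83%nat)];
 ILin [:: ((-66), 16%nat); ((-71), 18%nat); (15, 37%nat); ((-3), 41%nat); ((-6), 42%nat); (9, 47%nat); ((-8), 70%nat)];
 ILin [:: ((-16), 4%nat); ((-40), 19%nat); ((-1), 22%nat); (8, 24%nat); ((-8), 28%nat); (38, 29%nat); ((-24), 30%nat); (2, 75%nat); ((-8), 79%nat); ((-3), 81%nat)];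
 ILin [:: ((-64), 9%nat); (112, 10%nat); ((-64), 13%nat); ((-108), 39%nat); ((-16), 44%nat); (52, 49%nat); (15, 52%nat); ((-36), 59%nat); (9, 61%nat)];
 ILin [:: ((-2), 5%nat); (13, 6%nat); ((-10), 21%nat); (1, 27%nat); ((-2), 31%nat); ((-6), 80%nat)];
 ILin [:: ((-28), 14%nat); ((-24), 38%nat); (12, 45%nat); ((-24), 46%nat); ((-1), 63%nat)];
 ILin [:: ((-16), 4%nat); ((-144), 19%nat); (57, 22%nat); (38, 24%nat); ((-32), 28%nat); ((-14), 29%nat); ((-2), 30%nat); ((-2), 75%nat); ((-8), 79%nat); (3, 81%nat)];
 ILin [:: ((-16), 10%nat); ((-12), 39%nat); (20, 49%nat); ((-3), 52%nat); (12, 59%nat); ((-9), 61%nat)];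
 ILin [:: ((-12), 5%nat); ((-14), 6%nat); ((-52), 21%nat); ((-3), 25%nat); (6, 27%nat); (4, 31%nat); ((-24), 73%nat); (12, 80%nat); ((-16), 85%nat)];
 ILin [:: ((-48), 0%nat); (24, 11%nat); (34, 14%nat); (24, 38%nat); (24, 46%nat); (96, 48%nat); (24, 58%nat); ((-18), 60%nat); (1, 63%nat)];
 ILin [:: ((-70), 5%nat); (231, 6%nat); ((-46), 21%nat); ((-9), 25%nat); (11, 27%nat); (9, 31%nat); (72, 73%nat); ((-18), 80%nat); ((-8), 85%nat); ((-12), 88%nat)];
 ILin [:: (48, 0%nat); ((-6), 11%nat); ((-76), 14%nat); ((-120), 38%nat); (84, 45%nat); ((-144), 46%nat); ((-24), 48%nat); (24, 58%nat); ((-6), 60%nat); ((-1), 63%nat)];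
 ILin [:: (16, 4%nat); (32, 19%nat); ((-7), 22%nat); ((-2), 24%nat); ((-30), 29%nat); (22, 30%nat); ((-2), 75%nat); (8, 79%nat); (3, 81%nat)];
 ILin [:: (256, 9%nat); ((-592), 10%nat); (256, 13%nat); ((-108), 39%nat); (64, 44%nat); ((-28), 49%nat); (21, 52%nat); (36, 59%nat); ((-9), 61%nat)];
 ILin [:: ((-2), 5%nat); (1, 6%nat); ((-2), 21%nat); (1, 27%nat); (1, 31%nat); (2, 80%nat)];
 ILin [:: (12, 11%nat); (16, 14%nat); (24, 45%nat); (1, 63%nat)];
 ILin [:: (48, 4%nat); (248, 19%nat); ((-81), 22%nat); ((-60), 24%nat); (48, 28%nat); (6, 29%nat); (8, 30%nat); (2, 75%nat); (8, 79%nat); ((-3), 81%nat)];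
 ILin [:: (16, 9%nat); ((-16), 10%nat); ((-8), 13%nat); (12, 39%nat); ((-8), 44%nat); ((-28), 49%nat); (3, 52%nat); ((-12), 59%nat); (9, 61%nat)];
 ILin [:: (8, 8%nat); (6, 33%nat); (17, 36%nat); ((-2), 72%nat); (2, 77%nat); ((-3), 83%nat)];
 ILin [:: ((-42), 16%nat); ((-35), 18%nat); (15, 37%nat); ((-3), 41%nat); ((-6), 42%nat); (9, 47%nat); (4, 70%nat)];
 ILin [:: ((-10), 32%nat); ((-13), 35%nat); (2, 71%nat); ((-2), 76%nat); (3, 82%nat)];
 ILin [:: (1, 64%nat); ((-2), 68%nat)];
 ILin [:: (192, 7%nat); ((-536), 8%nat); (18, 33%nat); ((-8), 34%nat); ((-273), 36%nat); (18, 72%nat); ((-18), 77%nat); (27, 83%nat); (72, 89%nat)];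
 ILin [:: (96, 1%nat); (342, 16%nat); (289, 18%nat); ((-87), 37%nat); (15, 41%nat); (42, 42%nat); ((-63), 47%nat); (24, 67%nat); ((-8), 70%nat)];
 ILin [:: ((-40), 8%nat); ((-42), 33%nat); ((-43), 36%nat); (6, 72%nat); ((-6), 77%nat); (9, 83%nat)];
 ILin [:: (66, 16%nat); (7, 18%nat); ((-15), 37%nat); (3, 41%nat); (6, 42%nat); ((-9), 47%nat); ((-8), 70%nat)];
 ILin [:: (14, 32%nat); (9, 35%nat); ((-2), 71%nat); (2, 76%nat); ((-3), 82%nat)];
 ILin [:: ((-3), 64%nat); (4, 65%nat); (2, 68%nat)];
 ILin [:: (48, 7%nat); ((-32), 8%nat); (126, 33%nat); ((-8), 34%nat); (105, 36%nat); ((-18), 72%nat); (18, 77%nat); ((-27), 83%nat)];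
 ILin [:: (24, 1%nat); ((-24), 16%nat); (16, 18%nat); (9, 37%nat); ((-3), 41%nat); (4, 70%nat)];
 ILin [:: ((-256), 2%nat); ((-320), 12%nat); (160, 17%nat); (352, 40%nat); ((-704), 43%nat); ((-24), 50%nat); ((-36), 51%nat); (36, 53%nat); ((-9), 56%nat); (12, 62%nat); (264, 64%nat); (192, 65%nat); ((-192), 66%nat); (48, 68%nat); ((-64), 69%nat)];
 ILin [:: ((-4352), 2%nat); ((-4480), 12%nat); (2240, 17%nat); (3824, 40%nat); ((-7648), 43%nat); ((-273), 50%nat); ((-72), 51%nat); (72, 53%nat); (72, 56%nat); ((-96), 62%nat); (3093, 64%nat); (2184, 65%nat); ((-2184), 66%nat); (366, 68%nat); ((-488), 69%nat)];
 ILin [:: ((-128), 2%nat); ((-40), 12%nat); (32, 17%nat); (32, 40%nat); ((-64), 43%nat); ((-3), 50%nat); (33, 64%nat); (24, 65%nat); ((-24), 66%nat); (6, 68%nat); ((-8), 69%nat)];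
 ILin [:: ((-7168), 2%nat); ((-7520), 12%nat); (3520, 17%nat); (5536, 40%nat); ((-11072), 43%nat); ((-492), 50%nat); ((-108), 51%nat); (108, 53%nat); (153, 56%nat); ((-204), 62%nat); (4602, 64%nat); (3216, 65%nat); ((-3216), 66%nat); (444, 68%nat); ((-592), 69%nat)];
 ILin [:: (9728, 2%nat); (9760, 12%nat); ((-4160), 17%nat); ((-9056), 40%nat); (18112, 43%nat); (552, 50%nat); (108, 51%nat); ((-108), 53%nat); ((-153), 56%nat); (204, 62%nat); ((-6702), 64%nat); ((-3696), 65%nat); (3696, 66%nat); ((-564), 68%nat); (752, 69%nat)];
 ILin [:: ((-2816), 2%nat); ((-1280), 12%nat); (800, 17%nat); (992, 40%nat); ((-1984), 43%nat); ((-84), 50%nat); ((-36), 51%nat); (36, 53%nat); (21, 56%nat); ((-28), 62%nat); (924, 64%nat); (672, 65%nat); ((-672), 66%nat); (168, 68%nat); ((-224), 69%nat)];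
 ILin [:: ((-2816), 2%nat); ((-2080), 12%nat); (1280, 17%nat); (1712, 40%nat); ((-3424), 43%nat); ((-129), 50%nat); ((-36), 51%nat); (36, 53%nat); (36, 56%nat); ((-48), 62%nat); (1509, 64%nat); (1032, 65%nat); ((-1032), 66%nat); (78, 68%nat); ((-104), 69%nat)];
 ILin [:: (2816, 2%nat); (4480, 12%nat); ((-3200), 17%nat); ((-3872), 40%nat); (7744, 43%nat); (264, 50%nat); (36, 51%nat); ((-36), 53%nat); ((-81), 56%nat); (108, 62%nat); ((-3534), 64%nat); ((-1392), 65%nat); (1392, 66%nat); (12, 68%nat); ((-16), 69%nat)];
 ILin [:: ((-11008), 2%nat); ((-8320), 12%nat); (1920, 15%nat); (4480, 17%nat); (7456, 40%nat); ((-14912), 43%nat); ((-492), 50%nat); ((-108), 51%nat); (108, 53%nat); (123, 56%nat); ((-164), 62%nat); (6042, 64%nat); (3216, 65%nat); ((-3216), 66%nat); (444, 68%nat); ((-592), 69%nat)]].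
Definition tabF : seq (seq (nat * Z)) := [:: [:: (0%nat, 1); (100%nat, 96); (102%nat, 64); (104%nat, 64); (106%nat, 2592); (108%nat, 32); (110%nat, 192); (112%nat, 64); (114%nat, 288); (116%nat, 16)];
 [:: (0%nat, 1); (0%nat, 1); (118%nat, 96); (120%nat, 32); (122%nat, 64); (124%nat, 48); (126%nat, 64); (128%nat, 2592); (130%nat, 32); (132%nat, 1296)];
 [:: (0%nat, 1); (0%nat, 1); (0%nat, 1); (134%nat, 64); (136%nat, 48); (138%nat, 32); (140%nat, 2592); (142%nat, 32); (144%nat, 1296); (146%nat, 8)];
 [:: (0%nat, 1); (0%nat, 1); (0%nat, 1); (0%nat, 1); (148%nat, 288); (150%nat, 16); (152%nat, 96); (154%nat, 64); (156%nat, 48); (158%nat, 32)];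
 [:: (0%nat, 1); (0%nat, 1); (0%nat, 1); (0%nat, 1); (0%nat, 1); (160%nat, 16); (162%nat, 64); (164%nat, 48); (166%nat, 32); (168%nat, 48)];
 [:: (0%nat, 1); (0%nat, 1); (0%nat, 1); (0%nat, 1); (0%nat, 1); (0%nat, 1); (170%nat, 144); (172%nat, 32); (174%nat, 8); (176%nat, 16)];
 [:: (0%nat, 1); (0%nat, 1); (0%nat, 1); (0%nat, 1); (0%nat, 1); (0%nat, 1); (0%nat, 1); (178%nat, 32); (180%nat, 16); (182%nat, 144)];
 [:: (0%nat, 1); (0%nat, 1); (0%nat, 1); (0%nat, 1); (0%nat, 1); (0%nat, 1); (0%nat, 1); (0%nat, 1); (184%nat, 48); (186%nat, 8)];
 [:: (0%nat, 1); (0%nat, 1); (0%nat, 1); (0%nat, 1); (0%nat, 1); (0%nat, 1); (0%nat, 1); (0%nat, 1); (0%nat, 1); (188%nat, 72)];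
 [:: (0%nat, 1); (0%nat, 1); (0%nat, 1); (0%nat, 1); (0%nat, 1); (0%nat, 1); (0%nat, 1); (0%nat, 1); (0%nat, 1); (0%nat, 1)]].
Definition tabH : seq (seq (nat * Z)) := [:: [:: (0%nat, 1); (101%nat, 192); (103%nat, 96); (105%nat, 128); (107%nat, 96); (109%nat, 576); (111%nat, 192); (113%nat, 2592); (115%nat, 96); (117%nat, 648)];
 [:: (0%nat, 1); (0%nat, 1); (119%nat, 48); (121%nat, 192); (123%nat, 96); (125%nat, 96); (127%nat, 128); (129%nat, 96); (131%nat, 576); (133%nat, 48)];
 [:: (0%nat, 1); (0%nat, 1); (0%nat, 1); (135%nat, 864); (137%nat, 96); (139%nat, 16); (141%nat, 96); (143%nat, 64); (145%nat, 48); (147%nat, 288)];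
 [:: (0%nat, 1); (0%nat, 1); (0%nat, 1); (0%nat, 1); (149%nat, 24); (151%nat, 16); (153%nat, 192); (155%nat, 32); (157%nat, 96); (159%nat, 432)];
 [:: (0%nat, 1); (0%nat, 1); (0%nat, 1); (0%nat, 1); (0%nat, 1); (161%nat, 48); (163%nat, 864); (165%nat, 96); (167%nat, 48); (169%nat, 48)];
 [:: (0%nat, 1); (0%nat, 1); (0%nat, 1); (0%nat, 1); (0%nat, 1); (0%nat, 1); (171%nat, 96); (173%nat, 432); (175%nat, 48); (177%nat, 24)];
 [:: (0%nat, 1); (0%nat, 1); (0%nat, 1); (0%nat, 1); (0%nat, 1); (0%nat, 1); (0%nat, 1); (179%nat, 48); (181%nat, 16); (183%nat, 48)];
 [:: (0%nat, 1); (0%nat, 1); (0%nat, 1); (0%nat, 1); (0%nat, 1); (0%nat, 1); (0%nat, 1); (0%nat, 1); (185%nat, 48); (187%nat, 8)];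
 [:: (0%nat, 1); (0%nat, 1); (0%nat, 1); (0%nat, 1); (0%nat, 1); (0%nat, 1); (0%nat, 1); (0%nat, 1); (0%nat, 1); (189%nat, 12)];
 [:: (0%nat, 1); (0%nat, 1); (0%nat, 1); (0%nat, 1); (0%nat, 1); (0%nat, 1); (0%nat, 1); (0%nat, 1); (0%nat, 1); (0%nat, 1)]].
Definition tabD : seq (nat * Z) := [:: (0%nat, 1); (190%nat, 11520); (191%nat, 5760); (192%nat, 576); (193%nat, 11520); (194%nat, 11520); (195%nat, 11520); (196%nat, 5760); (197%nat, 11520); (198%nat, 11520)].
Definition cI3 : cmat := [:: [:: (1,0); (0,0); (0,0)]; [:: (0,0); (1,0); (0,0)]; [:: (0,0); (0,0); (1,0)]].
Definition cE3 : cmat := [:: [:: (1,0); (0,0); (0,0)]; [:: (0,0); (-1,0); (0,0)]; [:: (0,0); (0,0); (0,0)]].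
Definition cL1 : cmat := [:: [:: (0,0); (1,0); (0,0)]; [:: (1,0); (0,0); (0,0)]; [:: (0,0); (0,0); (0,0)]].
Definition cL2 : cmat := [:: [:: (0,0); (0,0); (0,0)]; [:: (0,0); (0,0); (1,0)]; [:: (0,0); (1,0); (0,0)]].
Definition gI : gz := (0,1).
Definition g1 : gz := (1,0).
Local Close Scope Z_scope.

Definition clsn : seq nat := [:: 0; 1; 2; 1; 3; 4; 2; 4; 5; 1; 3; 4; 3; 6; 7; 4; 7; 8; 2; 4; 5; 4; 7; 8; 5; 8; 9].
Definition repn : seq nat := [:: 0; 1; 2; 4; 5; 8; 13; 14; 17; 26].
Definition qn : seq nat := [:: 6; 2; 2; 2; 1; 2; 6; 2; 2; 6].
Definition gn : seq nat := [:: 1; 3; 3; 3; 6; 3; 1; 3; 3; 1].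

Definition ckron3 (A B C : cmat) : cmat :=
  mkmat 27 27 (fun i j => gmul (gmul (gnth A (i %/ 9 %% 3) (j %/ 9 %% 3))
                                     (gnth B (i %/ 3 %% 3) (j %/ 3 %% 3)))
                               (gnth C (i %% 3) (j %% 3))).
Definition cLoc (L : cmat) : cmat :=
  cscale 27 27 gI (cadd 27 27 (cadd 27 27 (ckron3 L cI3 cI3) (ckron3 cI3 L cI3)) (ckron3 cI3 cI3 L)).
Definition cHm : cmat :=
  cadd 27 27 (cadd 27 27 (ckron3 cE3 cE3 cI3) (ckron3 cE3 cI3 cE3)) (ckron3 cI3 cE3 cE3).
Definition gens27 : seq cmat := [:: cLoc cL1; cLoc cL2; cLoc cE3; cscale 27 27 gI cHm].
Definition cW : cmat := mkmat 27 10 (fun i m => if nth 0%N clsn i == m then g1 else g0).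
Definition cG : cmat := mkmat 10 10 (fun i j => if i == j then (Z.of_nat (nth 0%N gn i), Z0) else g0).

Definition basecheck : bool :=
  all (fun g => ceqb 27 10 (cmul 27 27 10 (nth c0 gens27 g) cW) (cmul 27 10 10 cW (nth c0 gensR g)))
      (iota 0 4).
Lemma basecheck_ok : basecheck = true.
Proof. vm_compute. reflexivity. Qed.

Definition tFm (a b : nat) : cmat := mkmat 10 10 (fun p q =>
  if (p == a) && (q == b) then (Z.of_nat (nth 0%N qn a), Z0)
  else if (p == b) && (q == a) then (Z.opp (Z.of_nat (nth 0%N qn b)), Z0) else g0).
Definition tHm (a b : nat) : cmat := mkmat 10 10 (fun p q =>
  if (p == a) && (q == b) then (Z0, Z.of_nat (nth 0%N qn a))
  else if (p == b) && (q == a) then (Z0, Z.of_nat (nth 0%N qn b)) else g0).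
Definition tDm (a : nat) : cmat := mkmat 10 10 (fun p q =>
  if (p == a) && (q == a) then gI
  else if (p == 0%N) && (q == 0%N) then (Z0, Zneg xH) else g0).

Definition progvals := run 10 gensR prog.
Definition tcheck (t : nat * Z) (M : cmat) :=
  ceqb 10 10 (nth c0 progvals t.1) (cscale 10 10 (t.2, Z0) M).
Definition targetcheck : bool :=
  all (fun a => all (fun b => (b <= a)%N ||
     (tcheck (nth (0%N, Z0) (nth [::] tabF a) b) (tFm a b)
      && tcheck (nth (0%N, Z0) (nth [::] tabH a) b) (tHm a b))) (iota 0 10)) (iota 0 10)
  && all (fun a => tcheck (nth (0%N, Z0) tabD a) (tDm a)) (iota 1 9).
Lemma targetcheck_ok : targetcheck = true.
Proof. vm_compute. reflexivity. Qed.

Definition misccheck : bool :=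
  ceqb 10 10 (cmul 10 27 10 (cadj 27 10 cW) cW) cG
  && ceqb 3 3 (cadj 3 3 cL1) cL1 && ceqb 3 3 (cadj 3 3 cL2) cL2 && ceqb 3 3 (cadj 3 3 cE3) cE3
  && geqb (gsum 3 (fun i => gnth cL1 i i)) g0 && geqb (gsum 3 (fun i => gnth cL2 i i)) g0
  && geqb (gsum 3 (fun i => gnth cE3 i i)) g0
  && all (fun a => nth 0%N gn a * nth 0%N qn a == 6)%N (iota 0 10).
Lemma misccheck_ok : misccheck = true.
Proof. vm_compute. reflexivity. Qed.

Lemma dig0 (i : 'I_27) : (dig i ord0 : nat) = (i %/ 9 %% 3)%N.
Proof. by rewrite /dig inordK // ltn_pmod. Qed.
Lemma dig1 (i : 'I_27) : (dig i (inord 1) : nat) = (i %/ 3 %% 3)%N.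
Proof. by rewrite /dig inordK ?ltn_pmod // inordK. Qed.
Lemma dig2 (i : 'I_27) : (dig i (inord 2) : nat) = (i %% 3)%N.
Proof. by rewrite /dig inordK ?ltn_pmod // inordK // subnn expn0 divn1. Qed.

Lemma interp_kron3 A B C :
  kron3 (interp 3 3 A) (interp 3 3 B) (interp 3 3 C) = interp 27 27 (ckron3 A B C).
Proof.
rewrite interp_mkmat; apply/matrixP => i j; rewrite !mxE !gphi_mul.
by rewrite !dig0 !dig1 !dig2.
Qed.

Lemma gphi_re z : gphi (z, Z0) = zR z.
Proof. by rewrite /gphi /= zR0 mulr0 addr0. Qed.
Lemma gphiI : gphi gI = 'i.
Proof. by rewrite /gphi /= zR0 zR1 add0r mulr1. Qed.
Lemma gphi1 : gphi g1 = 1.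
Proof. by rewrite gphi_re zR1. Qed.

Lemma interp_I3 : interp 3 3 cI3 = 1%:M.
Proof.
apply/matrixP => i j; rewrite !mxE.
case: i => [[|[|[|//]]]] hi; case: j => [[|[|[|//]]]] hj;
  rewrite /gnth /= ?gphi1 ?gphi0 //.
Qed.

Lemma zRm1 : zR (Zneg xH) = -1. Proof. by []. Qed.

Lemma interp_E3 : interp 3 3 cE3 = E3.
Proof.
apply/matrixP => i j; rewrite /E3 !mxE.
case: i => [[|[|[|//]]]] hi; case: j => [[|[|[|//]]]] hj;
  rewrite /gnth /= ?gphi_re ?zR1 ?zRm1 ?gphi0 ?zR0 //= ?mulr1n ?mulr0n //.
Qed.

Definition Wm : 'M[algC]_(27, 10) := interp 27 10 cW.
Definition PS (R : 'M[algC]_10) : Prop := exists Y, lie_gen gens Y /\ Y *m Wm = Wm *m R.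

Lemma PS_add A B : PS A -> PS B -> PS (A + B).
Proof.
move=> [Y [hY eY]] [Z [hZ eZ]]; exists (Y + Z); split; first exact: lie_add.
by rewrite mulmxDl mulmxDr eY eZ.
Qed.
Lemma PS_scale c A : c \is Num.real -> PS A -> PS (c *: A).
Proof.
move=> hc [Y [hY eY]]; exists (c *: Y); split; first exact: lie_scale.
by rewrite -scalemxAl eY scalemxAr.
Qed.
Lemma PS_br A B : PS A -> PS B -> PS (A *m B - B *m A).
Proof.
move=> [Y [hY eY]] [Z [hZ eZ]]; exists (Y *m Z - Z *m Y); split; first exact: lie_bracket.
by rewrite mulmxBl mulmxBr -!mulmxA eY eZ !mulmxA eY eZ.
Qed.

Lemma base_ok g : (g < 4)%N ->
  interp 27 27 (nth c0 gens27 g) *m Wm = Wm *m interp 10 10 (nth c0 gensR g).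
Proof.
move=> hg; rewrite /Wm -!interp_mul; apply: ceqbP.
have := basecheck_ok; rewrite /basecheck => /allP; apply.
by rewrite mem_iota.
Qed.

Lemma misc : misccheck. Proof. by rewrite misccheck_ok. Qed.

Lemma Loc_interp L : ceqb 3 3 (cadj 3 3 L) L -> geqb (gsum 3 (fun i => gnth L i i)) g0 ->
  lie_gen gens (interp 27 27 (cLoc L)).
Proof.
move=> hadj htr; apply: lie_base; left; exists (interp 3 3 L); split.
  by rewrite -interp_adj; apply: ceqbP.
split; first by rewrite interp_tr (geqbP _ _ htr) gphi0.
by rewrite /cLoc interp_scale gphiI !interp_add -!interp_kron3 interp_I3.
Qed.

Lemma PS_gen g : PS (interp 10 10 (nth c0 gensR g)).
Proof.
case: (ltnP g 4) => hg; last first.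
  exists 0; split; last by rewrite mul0mx nth_default // interp_c0 mulmx0.
  have -> : (0 : 'M[algC]_27) = 0 *: ('i *: Hmat) by rewrite scale0r.
  by apply: lie_scale; [exact: real0 | apply: lie_base; right].
exists (interp 27 27 (nth c0 gens27 g)); split; last exact: base_ok.
have h1 : ceqb 3 3 (cadj 3 3 cL1) cL1 by vm_compute.
have h2 : ceqb 3 3 (cadj 3 3 cL2) cL2 by vm_compute.
have h3 : ceqb 3 3 (cadj 3 3 cE3) cE3 by vm_compute.
have h4 : geqb (gsum 3 (fun i => gnth cL1 i i)) g0 by vm_compute.
have h5 : geqb (gsum 3 (fun i => gnth cL2 i i)) g0 by vm_compute.
have h6 : geqb (gsum 3 (fun i => gnth cE3 i i)) g0 by vm_compute.
case: g hg => [|[|[|[|//]]]] _ /=.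
- exact: Loc_interp.
- exact: Loc_interp.
- exact: Loc_interp.
- apply: lie_base; right.
  by rewrite interp_scale gphiI /cHm !interp_add -!interp_kron3 interp_I3 interp_E3.
Qed.

Definition qr (a : nat) : algC := (nth 0%N qn a)%:R.
Definition Fm (a b : 'I_10) : 'M[algC]_10 := qr a *: delta_mx a b - qr b *: delta_mx b a.
Definition Hm (a b : 'I_10) : 'M[algC]_10 := 'i *: (qr a *: delta_mx a b + qr b *: delta_mx b a).
Definition Dm (a : 'I_10) : 'M[algC]_10 := 'i *: (delta_mx a a - delta_mx 0 0).

Lemma gphi_nat n : gphi (Z.of_nat n, Z0) = n%:R.
Proof. by rewrite gphi_re zR_nat. Qed.
Lemma gphi_inat n : gphi (Z0, Z.of_nat n) = 'i * n%:R.
Proof. by rewrite /gphi /= zR_nat zR0 add0r. Qed.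
Lemma gphi_nnat n : gphi (Z.opp (Z.of_nat n), Z0) = - n%:R.
Proof. by rewrite gphi_re zR_opp zR_nat. Qed.

Lemma interp_tF (a b : 'I_10) : a != b -> interp 10 10 (tFm a b) = Fm a b.
Proof.
move=> hab; have hba : b != a by rewrite eq_sym.
rewrite interp_mkmat; apply/matrixP => p q; rewrite !mxE !val_eqE.
rewrite /qr.
case: (eqVneq p a) => [->|hpa]; case: (eqVneq q b) => [->|hqb];
case: (eqVneq p b) => [hpb|hpb]; case: (eqVneq q a) => [hqa|hqa];
  rewrite /= ?(negbTE hab) ?(negbTE hba) /= ?gphi_nat ?gphi_nnat ?gphi0; try ring; try (by move: hab; rewrite ?hpb ?hqa eqxx).
Qed.

Lemma interp_tH (a b : 'I_10) : a != b -> interp 10 10 (tHm a b) = Hm a b.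
Proof.
move=> hab; have hba : b != a by rewrite eq_sym.
rewrite interp_mkmat; apply/matrixP => p q; rewrite !mxE !val_eqE.
rewrite /qr.
case: (eqVneq p a) => [->|hpa]; case: (eqVneq q b) => [->|hqb];
case: (eqVneq p b) => [hpb|hpb]; case: (eqVneq q a) => [hqa|hqa];
  rewrite /= ?(negbTE hab) ?(negbTE hba) /= ?gphi_inat ?gphi0; try ring; try (by move: hab; rewrite ?hpb ?hqa eqxx).
Qed.

Lemma interp_tD (a : 'I_10) : a != 0 -> interp 10 10 (tDm a) = Dm a.
Proof.
move=> ha; rewrite interp_mkmat; apply/matrixP => p q; rewrite !mxE !val_eqE.
have e0 : forall x : 'I_10, (nat_of_ord x == 0%N) = (x == 0) by [].
rewrite !e0.
case: (eqVneq p a) => [->|hpa]; case: (eqVneq q a) => [->|hqa];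
case: (eqVneq p 0) => [hp0|hp0]; case: (eqVneq q 0) => [hq0|hq0];
  rewrite /= ?(negbTE ha) /= ?gphiI ?gphi0 ?gphi_re ?zRm1; try ring; try (by move: ha; rewrite ?hp0 ?hq0 eqxx).
all: by rewrite /gphi /= zR0 zRm1; ring.
Qed.

Definition dcheck : bool :=
  all (fun a => all (fun b => Z.ltb Z0 (nth (0%N, Z0) (nth [::] tabF a) b).2
                           && Z.ltb Z0 (nth (0%N, Z0) (nth [::] tabH a) b).2) (iota 0 10)) (iota 0 10)
  && all (fun a => Z.ltb Z0 (nth (0%N, Z0) tabD a).2) (iota 1 9).
Lemma dcheck_ok : dcheck = true. Proof. vm_compute. reflexivity. Qed.

Lemma zR_neq0 d : Z.ltb Z0 d -> zR d != 0.
Proof.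
move=> hd; apply/negP; rewrite /zR intr_eq0 => /eqP h.
have e : d = Z_of_int 0 by rewrite -h int_of_ZK.
by rewrite e in hd.
Qed.

Lemma PS0 : PS 0.
Proof. by have := PS_gen 4; rewrite nth_default // interp_c0. Qed.

Lemma PS_prog k : PS (interp 10 10 (nth c0 progvals k)).
Proof.
apply: run_inv.
- exact: PS0.
- exact: PS_gen.
- exact: PS_add.
- exact: PS_scale.
- exact: PS_br.
Qed.

Lemma PS_from t M T : tcheck t M -> interp 10 10 M = T -> Z.ltb Z0 t.2 -> PS T.
Proof.
move=> /ceqbP; rewrite interp_scale gphi_re => e eT hd.
have hP := PS_prog t.1; rewrite e eT in hP.
have hr : (zR t.2)^-1 \is Num.real by rewrite rpredV zR_real.
have := PS_scale _ _ hr hP.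
by rewrite scalerA mulVf ?zR_neq0 // scale1r.
Qed.

Lemma PS_FH (a b : 'I_10) : (a < b)%N -> PS (Fm a b) /\ PS (Hm a b).
Proof.
move=> hab.
have hne : a != b by rewrite -val_eqE /= neq_ltn hab.
move: targetcheck_ok dcheck_ok; rewrite /targetcheck /dcheck.
move=> /andP[/allP tA _] /andP[/allP dA _].
have ha : (nat_of_ord a) \in iota 0 10 by rewrite mem_iota leq0n ltn_ord.
have hb : (nat_of_ord b) \in iota 0 10 by rewrite mem_iota leq0n ltn_ord.
move: (tA _ ha) (dA _ ha) => /allP tB /allP dB.
move: (tB _ hb) (dB _ hb); rewrite leqNgt hab /= => /andP[t1 t2] /andP[d1 d2].
split; [exact: (PS_from _ _ _ t1 (interp_tF _ _ hne) d1) | exact: (PS_from _ _ _ t2 (interp_tH _ _ hne) d2)].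
Qed.

Lemma PS_D (a : 'I_10) : PS (Dm a).
Proof.
case: (eqVneq a 0) => [->|ha].
  by rewrite /Dm subrr scaler0; exact: PS0.
move: targetcheck_ok dcheck_ok; rewrite /targetcheck /dcheck.
move=> /andP[_ /allP tA] /andP[_ /allP dA].
have hai : (nat_of_ord a) \in iota 1 9.
  rewrite mem_iota lt0n ltn_ord andbT; move: ha; by rewrite -val_eqE.
exact: (PS_from _ _ _ (tA _ hai) (interp_tD _ ha) (dA _ hai)).
Qed.

Definition swapf (a b : 'I_3) (i : 'I_27) : 'I_27 :=
  enc (fun k => dig i ([fun z => z with a |-> b, b |-> a] k)).

Lemma symswap (v : 'cV[algC]_27) (hv : in_Sym v) (a b : 'I_3) (i : 'I_27) :
  v (swapf a b i) 0 = v i 0.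
Proof.
rewrite -(hv (tperm a b) i); congr (v _ 0).
by rewrite /swapf /enc /tperm !permE.
Qed.

Definition swl : seq (seq (nat*nat)) := [:: [:: ]; [:: ]; [:: ]; [:: (1,2)]; [:: ]; [:: ]; [:: (1,2)]; [:: (1,2)]; [:: ]; [:: (0,2)]; [:: (0,1)]; [:: (0,1)]; [:: (0,2)]; [:: ]; [:: ]; [:: (0,1); (0,2)]; [:: (1,2)]; [:: ]; [:: (0,2)]; [:: (0,1); (1,2)]; [:: (0,1)]; [:: (0,2)]; [:: (0,2)]; [:: (0,1)]; [:: (0,2)]; [:: (0,2)]; [:: ]]%N.

Definition o3 (k : nat) : 'I_3 := Ordinal (ltn_pmod k (isT : (0 < 3)%N)).
Definition applysw (i : 'I_27) (l : seq (nat * nat)) : 'I_27 :=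
  foldl (fun j ab => swapf (o3 ab.1) (o3 ab.2) j) i l.

Lemma applysw_sym v (hv : in_Sym v) i l : v (applysw i l) 0 = v i 0.
Proof.
elim: l i => [|ab l IH] i //=.
by rewrite /applysw /= -/(applysw _ l) IH symswap.
Qed.

Definition swapn (a b i : nat) : nat :=
  let t k := if k == a then b else if k == b then a else k in
  let d k := ((i %/ 3 ^ (2 - t k)) %% 3)%N in (9 * d 0 + 3 * d 1 + d 2)%N.

Lemma val_dig (i : 'I_27) (k : 'I_3) : (dig i k : nat) = ((i %/ 3 ^ (2 - k)) %% 3)%N.
Proof. by rewrite /dig inordK // ltn_pmod. Qed.

Lemma val_fw (a b k : 'I_3) :
  nat_of_ord ([fun z => z with a |-> b, b |-> a] k) =
  if k == a then nat_of_ord b else if k == b then nat_of_ord a else nat_of_ord k.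
Proof. by rewrite /=; case: (k == a); case: (k == b). Qed.

Lemma val_swapf (a b : 'I_3) (i : 'I_27) : nat_of_ord (swapf a b i) = swapn a b i.
Proof.
rewrite /swapf /enc inordK; last first.
  rewrite !val_dig; have h := fun x => ltn_pmod x (isT : (0 < 3)%N).
  have h0 := h (i %/ 3 ^ (2 - [fun z => z with a |-> b, b |-> a] ord0))%N.
  have h1 := h (i %/ 3 ^ (2 - [fun z => z with a |-> b, b |-> a] (inord 1)))%N.
  have h2 := h (i %/ 3 ^ (2 - [fun z => z with a |-> b, b |-> a] (inord 2)))%N.
  set x0 := (_ %% 3)%N in h0 *; set x1 := (_ %% 3)%N in h1 *; set x2 := (_ %% 3)%N in h2 *.
  rewrite ltnS in h0 h1 h2.
  lia.
rewrite !val_dig /swapn.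
have -> : (inord 1 : 'I_3) = Ordinal (isT : (1 < 3)%N) by apply: val_inj; rewrite /= inordK.
have -> : (inord 2 : 'I_3) = Ordinal (isT : (2 < 3)%N) by apply: val_inj; rewrite /= inordK.
by case: a b => [[|[|[|//]]] ?] [[|[|[|//]]] ?].
Qed.

Definition applyn (i : nat) (l : seq (nat * nat)) : nat :=
  foldl (fun j ab => swapn (ab.1 %% 3)%N (ab.2 %% 3)%N j) i l.

Lemma val_applysw i l : nat_of_ord (applysw i l) = applyn i l.
Proof.
elim: l i => [|ab l IH] i //=.
by rewrite /applysw /= -/(applysw _ l) IH val_swapf.
Qed.

Lemma repn_lt m : (nth 0%N repn m < 27)%N.
Proof.
case: (ltnP m (size repn)) => hm; last by rewrite nth_default.
have : all (fun x => x < 27)%N repn by [].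
by move/allP; apply; rewrite mem_nth.
Qed.

Lemma applysw_rep (i : 'I_27) :
  applysw i (nth [::] swl i) = inord (nth 0%N repn (nth 0%N clsn i)).
Proof.
apply: val_inj; rewrite /= val_applysw inordK ?repn_lt //.
have : all (fun i => applyn i (nth [::] swl i) == nth 0%N repn (nth 0%N clsn i)) (iota 0 27).
  by vm_compute.
by move/allP => h; apply/eqP; apply: h; rewrite mem_iota /=.
Qed.

Lemma sym_rep v (hv : in_Sym v) (i : 'I_27) :
  v (inord (nth 0%N repn (nth 0%N clsn i))) 0 = v i 0.
Proof. by rewrite -applysw_rep applysw_sym. Qed.

Lemma adjmM m n p (A : 'M[algC]_(m, n)) (B : 'M[algC]_(n, p)) :
  adjm (A *m B) = adjm B *m adjm A.
Proof. by rewrite /adjm (map_mxM Num.conj_op) trmx_mul. Qed.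
Lemma adjmK m n (A : 'M[algC]_(m, n)) : adjm (adjm A) = A.
Proof. by apply/matrixP => i j; rewrite /adjm !mxE conjCK. Qed.
Lemma adjmE m n (A : 'M[algC]_(m, n)) i j : adjm A i j = (A j i)^*.
Proof. by rewrite /adjm !mxE. Qed.

Definition Gm : 'M[algC]_10 := interp 10 10 cG.
Definition gr (a : nat) : algC := (nth 0%N gn a)%:R.

Lemma GmE (R : 'M[algC]_10) a b : (Gm *m R) a b = gr a * R a b.
Proof.
rewrite !mxE (bigD1 a) //= big1 ?addr0 => [|j hj].
  by rewrite /Gm interp_mkmat mxE eqxx gphi_nat.
rewrite /Gm interp_mkmat mxE.
have -> : (nat_of_ord a == nat_of_ord j) = false by rewrite val_eqE eq_sym (negbTE hj).
by rewrite gphi0 mul0r.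
Qed.

Lemma adjW : adjm Wm *m Wm = Gm.
Proof.
rewrite /Wm /Gm -interp_adj -interp_mul; apply: ceqbP; by vm_compute.
Qed.
Lemma adjG : adjm Gm = Gm.
Proof. rewrite /Gm -interp_adj; apply: ceqbP; by vm_compute. Qed.

Lemma grq (a : 'I_10) : gr a * qr a = 6.
Proof.
rewrite /gr /qr -natrM.
have -> : (nth 0 gn a * nth 0 qn a = 6)%N by case: a => [[|[|[|[|[|[|[|[|[|[|//]]]]]]]]]] ?].
by [].
Qed.

Lemma real6 : (6 : algC)^-1 \is Num.real.
Proof. by rewrite rpredV realn. Qed.

Lemma PS_target (R : 'M[algC]_10) :
  adjm (Gm *m R) = - (Gm *m R) -> \tr R = 0 -> PS R.
Proof.
move=> hskew htr.
set M := Gm *m R.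
have hM : forall a b, (M a b)^* = - M b a.
  move=> a b; have /= := congr1 (fun A : 'M[algC]_10 => A b a) hskew; rewrite adjmE [in X in _ = X -> _]mxE; exact.
have hR : forall a b, R a b = qr a / 6 * M a b.
  move=> a b; rewrite /M GmE.
  transitivity ((gr a * qr a) / 6 * R a b); last by ring.
  by rewrite grq divff ?mul1r // pnatr_eq0.
have hrect : forall z : algC, exists x y, [/\ x \is Num.real, y \is Num.real,
    z = x + 'i * y & z^* = x - 'i * y].
  move=> z; exists ('Re z), ('Im z); split; rewrite ?Creal_Re ?Creal_Im //.
    exact: algCrect.
  by rewrite {1}(algCrect z) conjC_rect ?Creal_Re ?Creal_Im.
pose K (a b : 'I_10) := if (a < b)%N then R a b *: delta_mx a b + R b a *: delta_mx b a
  else if b == a then R a a *: (delta_mx a a - delta_mx 0 0) else 0.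
have PK : forall a b, PS (K a b).
  move=> a b; rewrite /K; case: ltnP => hab.
    have [x [y [hx hy ez ecz]]] := hrect (M a b).
    have -> : R a b *: delta_mx a b + R b a *: delta_mx b a =
              x *: (6^-1 *: Fm a b) + y *: (6^-1 *: Hm a b).
      have hba : M b a = - (M a b)^* by rewrite hM opprK.
      rewrite (hR a b) (hR b a) hba ecz ez /Fm /Hm.
      apply/matrixP => p q; rewrite !mxE; ring.
    have [hF hH] := PS_FH a b hab.
    by apply: PS_add; apply: PS_scale => //; apply: PS_scale => //; exact: real6.
  case: eqP => [_|_]; last exact: PS0.
  have [x [y [hx hy ez ecz]]] := hrect (M a a).
  have hx0 : x = 0.
    have e : x - 'i * y - - (x + 'i * y) = 0 by rewrite -ecz -ez hM subrr.
    have : x * 2 = 0 by rewrite -e; ring.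
    by move/eqP; rewrite mulf_eq0 pnatr_eq0 orbF => /eqP.
  have -> : R a a *: (delta_mx a a - delta_mx 0 0) = (qr a * 6^-1 * y) *: Dm a.
    rewrite (hR a a) ez hx0 /Dm scalerA; congr (_ *: _); ring.
  apply: PS_scale; last exact: PS_D.
  by rewrite !rpredM ?realn ?real6.
have PsumK : PS (\sum_a \sum_b K a b).
  apply: (big_ind PS PS0 PS_add) => a _.
  exact: (big_ind PS PS0 PS_add).
suff -> : R = \sum_a \sum_b K a b by [].
pose T (a b : 'I_10) := R a b *: delta_mx a b.
pose U (a b : 'I_10) := (if (a < b)%N then T a b else 0) + (if (a < b)%N then T b a else 0)
   + (if b == a then T a b else 0).
pose Dg (a b : 'I_10) : 'M[algC]_10 := if b == a then R a a *: (delta_mx 0 0 : 'M[algC]_10) else 0.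
have e1 : \sum_a \sum_b K a b = \sum_a \sum_b U a b - \sum_a \sum_b Dg a b.
  rewrite -sumrB; apply: eq_bigr => a _; rewrite -sumrB; apply: eq_bigr => b _.
  rewrite /K /U /Dg /T; case: ltngtP => hab.
  - have -> : (b == a) = false by apply/negbTE; rewrite -val_eqE /= neq_ltn hab orbT.
    by rewrite !addr0 subr0.
  - have -> : (b == a) = false by apply/negbTE; rewrite -val_eqE /= neq_ltn hab.
    by rewrite !addr0 subr0.
  - have -> : b = a by apply: val_inj.
    by rewrite eqxx !add0r scalerBr.
have e2 : \sum_a \sum_b Dg a b = 0.
  rewrite (eq_bigr (fun a => R a a *: (delta_mx 0 0 : 'M[algC]_10))) => [|a _].
    by rewrite -scaler_suml -/(mxtrace R) htr scale0r.
  by rewrite /Dg -big_mkcond /= big_pred1_eq.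
have split3 : forall f g h : 'I_10 -> 'I_10 -> 'M[algC]_10,
    \sum_a \sum_b (f a b + g a b + h a b) =
    \sum_a \sum_b f a b + \sum_a \sum_b g a b + \sum_a \sum_b h a b.
  move=> f g h; rewrite -!big_split; apply: eq_bigr => a _; by rewrite -!big_split.
have e3 : \sum_a \sum_b U a b = \sum_a \sum_b T a b.
  rewrite [RHS](eq_bigr (fun a : 'I_10 => \sum_(b < 10) ((if (a < b)%N then T a b else 0)
        + (if (b < a)%N then T a b else 0) + (if b == a then T a b else 0)))); last first.
    move=> a _; apply: eq_bigr => b _; case: ltngtP => hab.
    - have -> : (b == a) = false by apply/negbTE; rewrite -val_eqE /= neq_ltn hab orbT.
      by rewrite !addr0.
    - have -> : (b == a) = false by apply/negbTE; rewrite -val_eqE /= neq_ltn hab.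
      by rewrite add0r addr0.
    - have -> : b = a by apply: val_inj.
      by rewrite eqxx !add0r.
  rewrite /U !split3; congr (_ + _ + _).
  by rewrite exchange_big.
by rewrite e1 e2 subr0 e3 {1}(matrix_sum_delta R).
Qed.

Lemma clsn_lt m : (nth 0%N clsn m < 10)%N.
Proof.
case: (ltnP m (size clsn)) => hm; last by rewrite nth_default.
have : all (fun x => x < 10)%N clsn by [].
by move/allP; apply; rewrite mem_nth.
Qed.

Theorem proposition6p2 (V : 'M[algC]_(27, 10))
  (hVsym : forall j : 'I_10, in_Sym (col j V))
  (hVon : adjm V *m V = 1%:M)
  (X : 'M[algC]_10) (hXskew : adjm X = - X) (hXtr : \tr X = 0) :
  exists Y : 'M[algC]_27, lie_gen gens Y /\ Y *m V = V *m X.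
Proof.
pose C : 'M[algC]_10 := \matrix_(m < 10, j < 10) V (inord (nth 0%N repn m)) j.
have hVWC : V = Wm *m C.
  apply/matrixP => i j; rewrite !mxE.
  rewrite (bigD1 (inord (nth 0%N clsn i))) //= big1 ?addr0 => [|m hm].
    rewrite /Wm interp_mkmat !mxE inordK ?clsn_lt // eqxx gphi1 mul1r.
    have := sym_rep _ (hVsym j) i; rewrite !mxE => ->.
    by [].
  rewrite /Wm interp_mkmat !mxE.
  have -> : (nth 0%N clsn i == m) = false.
    apply/negbTE; apply: contra hm => /eqP e; apply/eqP/val_inj.
    by rewrite /= inordK ?clsn_lt.
  by rewrite gphi0 mul0r.
have hC : adjm C *m Gm *m C = 1%:M.
  by move: hVon; rewrite hVWC adjmM -adjW !mulmxA.
pose R := C *m X *m adjm C *m Gm.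
have hRC : R *m C = C *m X.
  by rewrite /R -!mulmxA [adjm C *m (Gm *m C)]mulmxA hC mulmx1.
have hPS : PS R.
  apply: PS_target.
    by rewrite /R !adjmM adjmK adjG hXskew !mulmxA !(mulmxN, mulNmx).
  rewrite /R -!mulmxA mxtrace_mulC -!mulmxA [adjm C *m (Gm *m C)]mulmxA hC mulmx1.
  exact: hXtr.
have [Y [hY eY]] := hPS.
exists Y; split => //.
by rewrite hVWC mulmxA eY -mulmxA hRC mulmxA.
Qed.
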